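(* Let $n\ge 6$ and let $CTG_n$ be the set of chemical tricyclic graphs on $n$ vertices. Define the following subsets of $CTG_n$ (in each, all $m_{i,j}$ not listed are $0$): for $j=0,1,\dots,5$, $\gamma_{9+j}$ is the set of $G\in CTG_n$ with $n_4=0,n_3=4,n_2=n-4,n_1=0$, $m_{2,3}=2+2j$, $m_{3,3}=5-j$, $m_{2,2}=n-5-j$; and $\gamma_{65}$ is the set of $G\in CTG_n$ with $n_4=0,n_3=5,n_2=n-6,n_1=1$, $m_{1,2}=1$, $m_{2,3}=1$, $m_{3,3}=7$, $m_{2,2}=n-7$. Let $G_1\in\gamma_9$, $G_2\in\gamma_{10}$, $G_3\in\gamma_{11}$, $G_4\in\gamma_{12}$, $G_5\in\gamma_{13}$, $G_6\in\gamma_{14}$, $G_7\in\gamma_{65}$, and let $G\in CTG_n$ not belong to $\gamma_9\cup\cdots\cup\gamma_{14}\cup\gamma_{65}$. Then $SO_{red}(G_1)<SO_{red}(G_2)<\cdots<SO_{red}(G_7)<SO_{red}(G)$.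
   Context: All graphs are simple and connected. A chemical graph is a graph with maximum degree at most $4$; a tricyclic graph is a connected graph with $n$ vertices and $n+2$ edges. $d_G(u)$ is the degree of $u$, $n_i$ the number of vertices of degree $i$, and $m_{i,j}$ the number of edges joining a vertex of degree $i$ to a vertex of degree $j$. The reduced Sombor index is $SO_{red}(G)=\sum_{uv\in E(G)}\sqrt{(d_G(u)-1)^2+(d_G(v)-1)^2}$. *)

(* Defs.v *)
(* Simple graphs on vertex set 'I_n given by a symmetric,
   irreflexive relation; reals are any real closed field R. *)
From HB Require Import structures.
From mathcomp Require Import all_boot all_order all_algebra.
Set Implicit Arguments. Unset Strict Implicit. Unset Printing Implicit Defensive.
Import Order.TTheory GRing.Theory Num.Theory.

Local Open Scope ring_scope.
Section Graphs.
Variable n : nat.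
Implicit Types (e : rel 'I_n).

Definition simple_graph e := symmetric e /\ irreflexive e.

Definition gconnected e := forall u v : 'I_n, connect e u v.

Definition deg e (u : 'I_n) : nat := #|[set v | e u v]|.

Definition edgeset e : {set 'I_n * 'I_n} :=
  [set p | e p.1 p.2 && (p.1 < p.2)%N].

Definition nedges e : nat := #|edgeset e|.

Definition nverts_deg e (i : nat) : nat := #|[set u | deg e u == i]|.

Definition medges e (i j : nat) : nat :=
  #|[set p in edgeset e |
      ((deg e p.1 == i) && (deg e p.2 == j)) ||
      ((deg e p.1 == j) && (deg e p.2 == i))]|.

Definition CTG e : Prop :=
  [/\ simple_graph e, gconnected e, nedges e = n.+2 &
      forall u, (deg e u <= 4)%N].

Definition SOred (R : rcfType) e : R :=
  \sum_(p in edgeset e)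
     Num.sqrt (((deg e p.1)%:R - 1) ^+ 2 + ((deg e p.2)%:R - 1) ^+ 2).

(* G has degree counts nv i (1 <= i <= 4) and edge counts ms i j
   (1 <= i <= j <= 4); integers so that "negative" prescribed values
   are not silently truncated *)
Definition has_profile e (nv : nat -> int) (ms : nat -> nat -> int) : Prop :=
  (forall i, (1 <= i <= 4)%N -> (nverts_deg e i)%:Z = nv i) /\
  (forall i j, (1 <= i)%N -> (i <= j)%N -> (j <= 4)%N ->
     (medges e i j)%:Z = ms i j).

Definition gamma_nv (i : nat) : int :=
  match i with 2 => n%:Z - 4 | 3 => 4 | _ => 0 end.
Definition gamma_ms (j : nat) (a b : nat) : int :=
  match a, b with
  | 2, 3 => (2 + 2 * j)%:Z
  | 3, 3 => 5 - j%:Z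
  | 2, 2 => n%:Z - 5 - j%:Z
  | _, _ => 0 end.
Definition gamma (j : nat) e : Prop :=
  CTG e /\ has_profile e gamma_nv (gamma_ms j).

Definition gamma65_nv (i : nat) : int :=
  match i with 1 => 1 | 2 => n%:Z - 6 | 3 => 5 | _ => 0 end.
Definition gamma65_ms (a b : nat) : int :=
  match a, b with
  | 1, 2 => 1
  | 2, 3 => 1
  | 3, 3 => 7
  | 2, 2 => n%:Z - 7
  | _, _ => 0 end.
Definition gamma65 e : Prop :=
  CTG e /\ has_profile e gamma65_nv gamma65_ms.

End Graphs.

(* Main.v *)
Require Import Defs.
From mathcomp Require Import all_boot all_order all_algebra.
From mathcomp Require Import ring lra zify.
Import Order.TTheory GRing.Theory Num.Theory.

Module MA.
Set Implicit Arguments. Unset Strict Implicit. Unset Printing Implicit Defensive.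
Local Open Scope ring_scope.

Section G.
Variable n : nat.
Variable e : rel 'I_n.

Definition pairs : seq (nat * nat) :=
  [:: (1,1);(1,2);(1,3);(1,4);(2,2);(2,3);(2,4);(3,3);(3,4);(4,4)]%N.

Definition cls (i j : nat) (p : 'I_n * 'I_n) : bool :=
  ((deg e p.1 == i) && (deg e p.2 == j)) ||
  ((deg e p.1 == j) && (deg e p.2 == i)).

Lemma sum_pairs (V : nmodType) (F : nat -> nat -> V)
  (Fsym : forall a b, F a b = F b a)
  (hd : forall u, (1 <= deg e u <= 4)%N) :
  \sum_(p in edgeset e) F (deg e p.1) (deg e p.2) =
  \sum_(ij <- pairs) F ij.1 ij.2 *+ medges e ij.1 ij.2.
Proof.
transitivity (\sum_(p in edgeset e) \sum_(ij <- pairs) F ij.1 ij.2 *+ cls ij.1 ij.2 p).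
  apply: eq_bigr => p _; rewrite /cls.
  move: (hd p.1) (hd p.2).
  case: (deg e p.1) => [|[|[|[|[|a]]]]] //; case: (deg e p.2) => [|[|[|[|[|b]]]]] // _ _;
  rewrite !big_cons big_nil /= ?mulr0n ?mulr1n ?addr0 ?add0r // ?addr0 ?add0r //.
rewrite exchange_big; apply: eq_bigr => ij _; rewrite sumrMnr; congr (_ *+ _).
rewrite /medges -sum1_card (big_mkcond (fun p => p \in edgeset e)) [RHS]big_mkcond.
apply: eq_bigr => p _; rewrite !inE /cls.
by case: (e p.1 p.2 && _); case: (_ || _).
Qed.
End G.

End MA.
Import MA.

Module MB.
Set Implicit Arguments. Unset Strict Implicit. Unset Printing Implicit Defensive.

Section G.
Variable n : nat.
Variable e : rel 'I_n.

Lemma handshake (h : 'I_n -> nat) : simple_graph e ->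
  \sum_(p in edgeset e) (h p.1 + h p.2) = \sum_u h u * deg e u.
Proof.
move=> [esym eirr].
have -> : \sum_u h u * deg e u = \sum_u \sum_(v | e u v) h u.
  apply: eq_bigr => u _; rewrite sum_nat_cond_const mulnC.
  by rewrite /deg.
rewrite pair_big_dep /= [RHS](bigID (fun p : 'I_n * 'I_n => p.1 < p.2)) /=.
rewrite [X in _ = _ + X](reindex_inj (h := fun p : 'I_n * 'I_n => (p.2, p.1))); last first.
  by move=> [a b] [c d] /= [-> ->].
rewrite /= big_split /=; congr (_ + _); apply: eq_bigl => p; rewrite inE //.
rewrite (esym p.2).
case: (boolP (e p.1 p.2)) => hp //=.
have hne : p.1 != p.2 by apply: contraTneq hp => ->; rewrite eirr.
case: ltngtP => //.
by move=> heq; move: hne; rewrite (val_inj heq) eqxx.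
Qed.
End G.

End MB.
Import MB.

Module MC.
Set Implicit Arguments. Unset Strict Implicit. Unset Printing Implicit Defensive.

Section G.
Variable n : nat.
Variable e : rel 'I_n.

Lemma sum_degk k : \sum_u (deg e u == k) * deg e u = k * nverts_deg e k.
Proof.
rewrite /nverts_deg mulnC -sum_nat_cond_const [RHS]big_mkcond /=.
by apply: eq_bigr => u _; case: eqP => [->|]; rewrite ?mul1n ?mul0n.
Qed.

Lemma sum_ind k : \sum_u (deg e u == k : nat) = nverts_deg e k.
Proof.
rewrite /nverts_deg -[RHS]muln1 -sum_nat_cond_const [RHS]big_mkcond /=.
by apply: eq_bigr => u _; case: eqP.
Qed.

Lemma n_decomp : (forall u, 1 <= deg e u <= 4) ->
  nverts_deg e 1 + nverts_deg e 2 + nverts_deg e 3 + nverts_deg e 4 = n.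
Proof.
move=> hd; rewrite -!sum_ind -!big_split /=.
rewrite -[RHS]card_ord -sum1_card; apply: eq_bigr => u _.
by move: (hd u); case: (deg e u) => [|[|[|[|[|a]]]]].
Qed.

Lemma cut_edge (S : {set 'I_n}) x y : connect e x y -> x \in S -> y \notin S ->
  exists u v, [/\ u \in S, v \notin S & e u v].
Proof.
move/connectP=> [p pth ->] {y}.
elim: p x pth => [|z p IH] x /=.
  by move=> _ ->.
move=> /andP[exz pz] xs ys.
case: (boolP (z \in S)) => zs.
  exact: IH zs ys.
by exists x, z.
Qed.

Lemma deg_ge1 : (2 <= n)%N -> gconnected e -> forall u, (1 <= deg e u)%N.
Proof.
move=> hn hc u.
have h0 : (0 < n)%N by apply: leq_trans hn.
pose o0 := Ordinal h0; pose o1 := Ordinal hn.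
have [v hv] : exists v, v != u.
  case: (eqVneq o0 u) => [<-|]; last by exists o0.
  by exists o1; apply/eqP => /(congr1 val).
have hv' : v \notin [set u] by rewrite inE.
have [a [b [ha hb hab]]] := cut_edge (hc u v) (set11 u) hv'.
move: ha; rewrite inE => /eqP <-.
rewrite /deg card_gt0; apply/set0Pn; exists b; by rewrite inE.
Qed.

Lemma edge_cls a b i j : simple_graph e -> e a b -> deg e a = i -> deg e b = j ->
  (0 < medges e i j)%N.
Proof.
move=> [esym eirr] hab ha hb; apply/card_gt0P.
case: (ltngtP a b) => h.
- exists (a, b); rewrite !inE /= hab h /= ha hb !eqxx //.
- exists (b, a); rewrite !inE /= esym hab h /= ha hb !eqxx orbT //.
- by move: hab; rewrite (val_inj h) eirr.
Qed.

Lemma mii0 i : simple_graph e -> (nverts_deg e i <= 1)%N -> medges e i i = 0.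
Proof.
move=> [esym eirr] /card_le1_eqP h.
apply/eqP; rewrite cards_eq0; apply/eqP/setP => p; rewrite !inE.
apply/negbTE; rewrite orbb; apply/negP => /andP[/andP[hp hlt] /andP[h1 h2]].
have := h p.1 p.2; rewrite !inE h1 h2 => /(_ isT isT) heq.
by move: hlt; rewrite heq ltnn.
Qed.

Lemma mij_le i j : i != j ->
  (medges e i j <= nverts_deg e i * nverts_deg e j)%N.
Proof.
move=> hij.
pose f (p : 'I_n * 'I_n) := if deg e p.1 == i then p else (p.2, p.1).
rewrite /medges /nverts_deg -cardsX.
set C := [set p in edgeset e | _].
have inj : {in C &, injective f}.
  move=> [a b] [c d]; rewrite !inE /f /= => /andP[/andP[_ h1] hc1] /andP[/andP[_ h2] hc2].
  case: (boolP (deg e a == i)) => ha; case: (boolP (deg e c == i)) => hc //.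
  - move=> [ea eb]; move: h1 h2; rewrite ea eb => h1 h2.
    by have := ltn_trans h1 h2; rewrite ltnn.
  - move=> [ea eb]; move: h1 h2; rewrite ea eb => h1 h2.
    by have := ltn_trans h1 h2; rewrite ltnn.
  - by move=> [-> ->].
rewrite -(card_in_imset inj).
apply: subset_leq_card; apply/subsetP => q /imsetP [p].
rewrite !inE /f => /andP[_ hc] ->.
case/orP: hc => /andP[/eqP h1 /eqP h2].
  by rewrite h1 eqxx /= h1 h2 !eqxx.
have hji : j != i by rewrite eq_sym.
by rewrite h1 (negbTE hji) /= h1 h2 !eqxx.
Qed.
End G.

End MC.
Import MC.

Module MD.
Set Implicit Arguments. Unset Strict Implicit. Unset Printing Implicit Defensive.

Lemma natmulE (x m : nat) : (x *+ m)%R = x * m.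
Proof. by elim: m => [|m IH]; rewrite ?mulr0n ?muln0 // mulrS IH mulnS. Qed.

Section G.
Variable n : nat.
Variable e : rel 'I_n.
Local Notation m := (medges e).
Local Notation nv := (nverts_deg e).

Lemma facts : (6 <= n)%N -> CTG e ->
  (forall u, 1 <= deg e u <= 4) /\
  [/\ 2 * m 1 1 + m 1 2 + m 1 3 + m 1 4 = nv 1,
   m 1 2 + 2 * m 2 2 + m 2 3 + m 2 4 = 2 * nv 2,
   m 1 3 + m 2 3 + 2 * m 3 3 + m 3 4 = 3 * nv 3,
   m 1 4 + m 2 4 + m 3 4 + 2 * m 4 4 = 4 * nv 4 &
   [/\ m 1 1 + m 1 2 + m 1 3 + m 1 4 + m 2 2 + m 2 3 + m 2 4 + m 3 3 + m 3 4 + m 4 4 = n.+2,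
    nv 1 + nv 2 + nv 3 + nv 4 = n &
    (- (nv 1)%:Z + (nv 3)%:Z + 2 * (nv 4)%:Z = 4)%R]].
Proof.
move=> hn [hs hc hE h4].
have hd : forall u, 1 <= deg e u <= 4.
  by move=> u; rewrite h4 andbT; apply: deg_ge1 => //; apply: leq_trans hn.
have Hk : forall k, (\sum_(ij <- pairs) ((ij.1 == k) + (ij.2 == k))%N *+ m ij.1 ij.2)%R = k * nv k.
  move=> k; rewrite -(sum_pairs (F := fun a b => (a == k) + (b == k))) //; last first.
    by move=> a b; rewrite addnC.
  by rewrite (handshake (fun u => (deg e u == k : nat))) // sum_degk.
have hN := n_decomp hd.
have hM : (\sum_(ij <- pairs) 1%N *+ m ij.1 ij.2)%R = n.+2.
  rewrite -(sum_pairs (F := fun a b => 1)) // -hE /nedges.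
  by rewrite sum1_card.
move: (Hk 1) (Hk 2) (Hk 3) (Hk 4) hM; rewrite /pairs !big_cons !big_nil /= !natmulE !natrDE.
move=> h1 h2 h3 h4' hM'.
split => //; split; try lia.
split => //; lia.
Qed.
End G.

End MD.
Import MD.

Module ME.
Set Implicit Arguments. Unset Strict Implicit. Unset Printing Implicit Defensive.
Local Open Scope ring_scope.

Definition Fr (R : rcfType) (a b : nat) : R :=
  Num.sqrt (((a%:R - 1) ^+ 2 + (b%:R - 1) ^+ 2)).

Lemma alg10 (R : comNzRingType) (f11 f12 f13 f14 f22 f23 f24 f33 f34 f44 : R)
  (a11 a12 a13 a14 a22 a23 a24 a33 a34 a44 : nat) :
  f11 *+ a11 + (f12 *+ a12 + (f13 *+ a13 + (f14 *+ a14 + (f22 *+ a22 +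
  (f23 *+ a23 + (f24 *+ a24 + (f33 *+ a33 + (f34 *+ a34 + (f44 *+ a44 + 0))))))))) =
  (a11 + a12 + a13 + a14 + a22 + a23 + a24 + a33 + a34 + a44)%N%:R * f22 +
    (a11%:R * (f11 - f22) + a12%:R * (f12 - f22) + a13%:R * (f13 - f22) +
     a14%:R * (f14 - f22) + a23%:R * (f23 - f22) + a24%:R * (f24 - f22) +
     a33%:R * (f33 - f22) + a34%:R * (f34 - f22) + a44%:R * (f44 - f22)).
Proof. rewrite !natrD; ring. Qed.

Section G.
Variable R : rcfType.
Variable n : nat.
Variable e : rel 'I_n.
Local Notation m := (medges e).
Local Notation F := (Fr R).

Lemma SO_X : (6 <= n)%N -> CTG e ->
  SOred R e = (n.+2)%:R * F 2 2 +
    ((m 1 1)%:R * (F 1 1 - F 2 2) + (m 1 2)%:R * (F 1 2 - F 2 2) +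
     (m 1 3)%:R * (F 1 3 - F 2 2) + (m 1 4)%:R * (F 1 4 - F 2 2) +
     (m 2 3)%:R * (F 2 3 - F 2 2) + (m 2 4)%:R * (F 2 4 - F 2 2) +
     (m 3 3)%:R * (F 3 3 - F 2 2) + (m 3 4)%:R * (F 3 4 - F 2 2) +
     (m 4 4)%:R * (F 4 4 - F 2 2)).
Proof.
move=> hn hG; have [hd [_ _ _ _ [HE _ _]]] := facts hn hG.
have -> : SOred R e = \sum_(p in edgeset e) F (deg e p.1) (deg e p.2) by [].
rewrite (sum_pairs (F := F)) //; last by move=> a b; rewrite /Fr addrC.
rewrite /pairs !big_cons big_nil /= -HE; exact: alg10.
Qed.
End G.

Lemma sqrt_bnd (R : rcfType) (c a b : R) : 0 <= a -> 0 <= c -> a ^+ 2 <= c -> c <= b ^+ 2 -> 0 <= b ->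
  a <= Num.sqrt c <= b.
Proof.
move=> ha hc h1 h2 hb.
have s0 := sqrtr_ge0 c; have s2 := sqr_sqrtr hc.
apply/andP; split; nra.
Qed.

Section Num.
Variable R : rcfType.
Local Notation F := (Fr R).
Local Notation "a // b" := (a%:R / b%:R : R) (at level 40).

Lemma bounds :
  F 1 1 = 0 /\ F 1 2 = 1 /\ F 1 3 = 2%:R /\ F 1 4 = 3%:R /\
  (141421 // 100000 <= F 2 2 <= 141422 // 100000) /\
  (223606 // 100000 <= F 2 3 <= 223607 // 100000) /\
  (316227 // 100000 <= F 2 4 <= 316228 // 100000) /\
  (282842 // 100000 <= F 3 3 <= 282843 // 100000) /\
  (360555 // 100000 <= F 3 4 <= 360556 // 100000) /\
  (424264 // 100000 <= F 4 4 <= 424265 // 100000).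
Proof.
split; first by rewrite /Fr subrr expr0n /= addr0 sqrtr0.
split.
  rewrite /Fr subrr expr0n /= add0r.
  have -> : ((2%:R : R) - 1) = 1 by lra.
  by rewrite expr1n sqrtr1.
split.
  rewrite /Fr subrr expr0n /= add0r.
  have -> : ((3%:R : R) - 1) = 2%:R by lra.
  by rewrite sqrtr_sqr ger0_norm.
split.
  rewrite /Fr subrr expr0n /= add0r.
  have -> : ((4%:R : R) - 1) = 3%:R by lra.
  by rewrite sqrtr_sqr ger0_norm.
by do ! split; apply: sqrt_bnd; lra.
Qed.
End Num.

End ME.
Import ME.

Module MF.
Set Implicit Arguments. Unset Strict Implicit. Unset Printing Implicit Defensive.
Local Open Scope ring_scope.

Section G.
Variable R : rcfType.
Variable n : nat.
Variable e : rel 'I_n.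
Local Notation m := (medges e).
Local Notation F := (Fr R).

Lemma gamma_SO j : (j <= 5)%N -> (6 <= n)%N -> gamma j e ->
  SOred R e = (n.+2)%:R * F 2 2 +
    ((2 + 2 * j)%N%:R * (F 2 3 - F 2 2) + (5 - j)%N%:R * (F 3 3 - F 2 2)).
Proof.
move=> hj hn [hG [_ hms]]; rewrite SO_X //.
have e11 : m 1 1 = 0%N by move: (hms 1%N 1%N isT isT isT) => /=; lia.
have e12 : m 1 2 = 0%N by move: (hms 1%N 2%N isT isT isT) => /=; lia.
have e13 : m 1 3 = 0%N by move: (hms 1%N 3%N isT isT isT) => /=; lia.
have e14 : m 1 4 = 0%N by move: (hms 1%N 4%N isT isT isT) => /=; lia.
have e23 : m 2 3 = (2 + 2 * j)%N by move: (hms 2%N 3%N isT isT isT) => /=; lia.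
have e24 : m 2 4 = 0%N by move: (hms 2%N 4%N isT isT isT) => /=; lia.
have e33 : m 3 3 = (5 - j)%N by move: (hms 3%N 3%N isT isT isT) => /=; lia.
have e34 : m 3 4 = 0%N by move: (hms 3%N 4%N isT isT isT) => /=; lia.
have e44 : m 4 4 = 0%N by move: (hms 4%N 4%N isT isT isT) => /=; lia.
rewrite e11 e12 e13 e14 e23 e24 e33 e34 e44.
move: (2 + 2 * j)%N (5 - j)%N => a b; ring.
Qed.

Lemma gamma65_SO : (6 <= n)%N -> gamma65 e ->
  SOred R e = (n.+2)%:R * F 2 2 +
    ((F 1 2 - F 2 2) + (F 2 3 - F 2 2) + 7%:R * (F 3 3 - F 2 2)).
Proof.
move=> hn [hG [_ hms]]; rewrite SO_X //.
have e11 : m 1 1 = 0%N by move: (hms 1%N 1%N isT isT isT) => /=; lia.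
have e12 : m 1 2 = 1%N by move: (hms 1%N 2%N isT isT isT) => /=; lia.
have e13 : m 1 3 = 0%N by move: (hms 1%N 3%N isT isT isT) => /=; lia.
have e14 : m 1 4 = 0%N by move: (hms 1%N 4%N isT isT isT) => /=; lia.
have e23 : m 2 3 = 1%N by move: (hms 2%N 3%N isT isT isT) => /=; lia.
have e24 : m 2 4 = 0%N by move: (hms 2%N 4%N isT isT isT) => /=; lia.
have e33 : m 3 3 = 7%N by move: (hms 3%N 3%N isT isT isT) => /=; lia.
have e34 : m 3 4 = 0%N by move: (hms 3%N 4%N isT isT isT) => /=; lia.
have e44 : m 4 4 = 0%N by move: (hms 4%N 4%N isT isT isT) => /=; lia.
rewrite e11 e12 e13 e14 e23 e24 e33 e34 e44; ring.
Qed.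
End G.

End MF.
Import MF.

Module MH.
Set Implicit Arguments. Unset Strict Implicit. Unset Printing Implicit Defensive.
Local Open Scope ring_scope.

Section G.
Variable R : rcfType.
Variable n : nat.
Variable e : rel 'I_n.
Local Notation m := (medges e).
Local Notation nv := (nverts_deg e).
Local Notation F := (Fr R).
Local Notation "a // b" := (a%:R / b%:R : R) (at level 40).

Lemma no_K4 : (6 <= n)%N -> CTG e -> nv 3 = 4%N ->
  m 1 3 = 0%N -> m 2 3 = 0%N -> m 3 4 = 0%N -> False.
Proof.
move=> hn [hs hc hE h4] h3 m13 m23 m34.
have hd : forall u, (1 <= deg e u <= 4)%N.
  by move=> u; rewrite h4 andbT; apply: deg_ge1 => //; apply: leq_trans hn.
have : (0 < nv 3)%N by rewrite h3.
move/card_gt0P => [u]; rewrite inE => hu.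
have [y hy] : exists y, deg e y != 3%N.
  case: (pickP (fun y => deg e y != 3%N)) => [y hy|hall]; first by exists y.
  exfalso.
  have : nv 3 = n.
    rewrite /nverts_deg.
    have -> : [set u | deg e u == 3%N] = setT.
      by apply/setP => x; rewrite !inE -(negbK (deg e x == 3%N)) hall.
    by rewrite cardsT card_ord.
  lia.
have hy' : y \notin [set u | deg e u == 3%N] by rewrite inE.
have hu' : u \in [set u | deg e u == 3%N] by rewrite inE.
have [a [b [ha hb hab]]] := cut_edge (hc u y) hu' hy'.
move: ha hb; rewrite !inE => /eqP ha hb.
have hs' := hs; case: hs' => [esym _].
move: (hd b) hb; case hdb: (deg e b) => [|[|[|[|[|k]]]]] //= _ _.
- have := edge_cls hs (b := a) (i := 1%N) (j := 3%N) _ hdb ha.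
  by rewrite esym m13 => /(_ hab).
- have := edge_cls hs (b := a) (i := 2%N) (j := 3%N) _ hdb ha.
  by rewrite esym m23 => /(_ hab).
- have := edge_cls hs (a := a) (b := b) (i := 3%N) (j := 4%N) hab ha hdb.
  by rewrite m34.
Qed.
End G.

End MH.
Import MH.

Module MP.
Local Open Scope ring_scope.
Lemma caseA1 (R : realFieldType) (M11 M12 M13 M14 M23 M24 M33 M34 M44 N1 N3 N4 T11 T12 T13 T14 T23 T24 T33 T34 T44 : R)
 (p11 : 0 <= M11) (p12 : 0 <= M12) (p13 : 0 <= M13) (p14 : 0 <= M14) (p23 : 0 <= M23) (p24 : 0 <= M24) (p33 : 0 <= M33) (p34 : 0 <= M34) (p44 : 0 <= M44)
 (q1 : 0 <= N1) (q3 : 0 <= N3) (q4 : 0 <= N4)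
 (t11 : M11 * (- 14200%:R) <= 10000%:R * T11)
 (t12 : M12 * (- 4200%:R) <= 10000%:R * T12)
 (t13 : M13 * 5800%:R <= 10000%:R * T13)
 (t14 : M14 * 15800%:R <= 10000%:R * T14)
 (t23 : M23 * 8218%:R <= 10000%:R * T23)
 (t24 : M24 * 17480%:R <= 10000%:R * T24)
 (t33 : M33 * 14142%:R <= 10000%:R * T33)
 (t34 : M34 * 21913%:R <= 10000%:R * T34)
 (t44 : M44 * 28284%:R <= 10000%:R * T44)
 (R1 : 2%:R * M11 + M12 + M13 + M14 = N1)
 (R3 : M13 + M23 + 2%:R * M33 + M34 = 3%:R * N3)
 (R4 : M14 + M24 + M34 + 2%:R * M44 = 4%:R * N4)
 (Rrel : N3 + 2%:R * N4 = 4%:R + N1) :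
 2%:R <= N4 -> 103072%:R < 10000%:R * (T11 + T12 + T13 + T14 + T23 + T24 + T33 + T34 + T44).
Proof. move=> *; lra. Qed.

Lemma caseA2 (R : realFieldType) (M11 M12 M13 M14 M23 M24 M33 M34 M44 N1 N3 N4 T11 T12 T13 T14 T23 T24 T33 T34 T44 : R)
 (p11 : 0 <= M11) (p12 : 0 <= M12) (p13 : 0 <= M13) (p14 : 0 <= M14) (p23 : 0 <= M23) (p24 : 0 <= M24) (p33 : 0 <= M33) (p34 : 0 <= M34) (p44 : 0 <= M44)
 (q1 : 0 <= N1) (q3 : 0 <= N3) (q4 : 0 <= N4)
 (t11 : M11 * (- 14200%:R) <= 10000%:R * T11)
 (t12 : M12 * (- 4200%:R) <= 10000%:R * T12)
 (t13 : M13 * 5800%:R <= 10000%:R * T13)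
 (t14 : M14 * 15800%:R <= 10000%:R * T14)
 (t23 : M23 * 8218%:R <= 10000%:R * T23)
 (t24 : M24 * 17480%:R <= 10000%:R * T24)
 (t33 : M33 * 14142%:R <= 10000%:R * T33)
 (t34 : M34 * 21913%:R <= 10000%:R * T34)
 (t44 : M44 * 28284%:R <= 10000%:R * T44)
 (R1 : 2%:R * M11 + M12 + M13 + M14 = N1)
 (R3 : M13 + M23 + 2%:R * M33 + M34 = 3%:R * N3)
 (R4 : M14 + M24 + M34 + 2%:R * M44 = 4%:R * N4)
 (Rrel : N3 + 2%:R * N4 = 4%:R + N1) :
 N4 = 1 -> 3%:R <= N3 -> 103072%:R < 10000%:R * (T11 + T12 + T13 + T14 + T23 + T24 + T33 + T34 + T44).
Proof. move=> *; lra. Qed.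

Lemma caseA3 (R : realFieldType) (M11 M12 M13 M14 M23 M24 M33 M34 M44 N1 N3 N4 T11 T12 T13 T14 T23 T24 T33 T34 T44 : R)
 (p11 : 0 <= M11) (p12 : 0 <= M12) (p13 : 0 <= M13) (p14 : 0 <= M14) (p23 : 0 <= M23) (p24 : 0 <= M24) (p33 : 0 <= M33) (p34 : 0 <= M34) (p44 : 0 <= M44)
 (q1 : 0 <= N1) (q3 : 0 <= N3) (q4 : 0 <= N4)
 (t11 : M11 * (- 14200%:R) <= 10000%:R * T11)
 (t12 : M12 * (- 4200%:R) <= 10000%:R * T12)
 (t13 : M13 * 5800%:R <= 10000%:R * T13)
 (t14 : M14 * 15800%:R <= 10000%:R * T14)
 (t23 : M23 * 8218%:R <= 10000%:R * T23)
 (t24 : M24 * 17480%:R <= 10000%:R * T24)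
 (t33 : M33 * 14142%:R <= 10000%:R * T33)
 (t34 : M34 * 21913%:R <= 10000%:R * T34)
 (t44 : M44 * 28284%:R <= 10000%:R * T44)
 (R1 : 2%:R * M11 + M12 + M13 + M14 = N1)
 (R3 : M13 + M23 + 2%:R * M33 + M34 = 3%:R * N3)
 (R4 : M14 + M24 + M34 + 2%:R * M44 = 4%:R * N4)
 (Rrel : N3 + 2%:R * N4 = 4%:R + N1) :
 N4 = 0 -> 6%:R <= N3 -> 103072%:R < 10000%:R * (T11 + T12 + T13 + T14 + T23 + T24 + T33 + T34 + T44).
Proof. move=> *; lra. Qed.

Lemma caseB (R : realFieldType) (M11 M12 M13 M14 M23 M24 M33 M34 M44 N1 N3 N4 T11 T12 T13 T14 T23 T24 T33 T34 T44 : R)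
 (p11 : 0 <= M11) (p12 : 0 <= M12) (p13 : 0 <= M13) (p14 : 0 <= M14) (p23 : 0 <= M23) (p24 : 0 <= M24) (p33 : 0 <= M33) (p34 : 0 <= M34) (p44 : 0 <= M44)
 (q1 : 0 <= N1) (q3 : 0 <= N3) (q4 : 0 <= N4)
 (t11 : M11 * (- 14200%:R) <= 10000%:R * T11)
 (t12 : M12 * (- 4200%:R) <= 10000%:R * T12)
 (t13 : M13 * 5800%:R <= 10000%:R * T13)
 (t14 : M14 * 15800%:R <= 10000%:R * T14)
 (t23 : M23 * 8218%:R <= 10000%:R * T23)
 (t24 : M24 * 17480%:R <= 10000%:R * T24)
 (t33 : M33 * 14142%:R <= 10000%:R * T33)
 (t34 : M34 * 21913%:R <= 10000%:R * T34)
 (t44 : M44 * 28284%:R <= 10000%:R * T44)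
 (R1 : 2%:R * M11 + M12 + M13 + M14 = N1)
 (R3 : M13 + M23 + 2%:R * M33 + M34 = 3%:R * N3)
 (R4 : M14 + M24 + M34 + 2%:R * M44 = 4%:R * N4)
 (Rrel : N3 + 2%:R * N4 = 4%:R + N1) :
 N4 = 1 -> N3 = 2%:R -> M44 = 0 -> M34 <= 2%:R -> 103072%:R < 10000%:R * (T11 + T12 + T13 + T14 + T23 + T24 + T33 + T34 + T44).
Proof. move=> *; lra. Qed.

Lemma caseD1 (R : realFieldType) (M11 M12 M13 M14 M23 M24 M33 M34 M44 N1 N3 N4 T11 T12 T13 T14 T23 T24 T33 T34 T44 : R)
 (p11 : 0 <= M11) (p12 : 0 <= M12) (p13 : 0 <= M13) (p14 : 0 <= M14) (p23 : 0 <= M23) (p24 : 0 <= M24) (p33 : 0 <= M33) (p34 : 0 <= M34) (p44 : 0 <= M44)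
 (q1 : 0 <= N1) (q3 : 0 <= N3) (q4 : 0 <= N4)
 (t11 : M11 * (- 14200%:R) <= 10000%:R * T11)
 (t12 : M12 * (- 4200%:R) <= 10000%:R * T12)
 (t13 : M13 * 5800%:R <= 10000%:R * T13)
 (t14 : M14 * 15800%:R <= 10000%:R * T14)
 (t23 : M23 * 8218%:R <= 10000%:R * T23)
 (t24 : M24 * 17480%:R <= 10000%:R * T24)
 (t33 : M33 * 14142%:R <= 10000%:R * T33)
 (t34 : M34 * 21913%:R <= 10000%:R * T34)
 (t44 : M44 * 28284%:R <= 10000%:R * T44)
 (R1 : 2%:R * M11 + M12 + M13 + M14 = N1)
 (R3 : M13 + M23 + 2%:R * M33 + M34 = 3%:R * N3)
 (R4 : M14 + M24 + M34 + 2%:R * M44 = 4%:R * N4)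
 (Rrel : N3 + 2%:R * N4 = 4%:R + N1) :
 N4 = 0 -> N3 = 5%:R -> N1 = 1 -> M13 = 1 -> 103072%:R < 10000%:R * (T11 + T12 + T13 + T14 + T23 + T24 + T33 + T34 + T44).
Proof. move=> *; lra. Qed.

Lemma caseD2 (R : realFieldType) (M11 M12 M13 M14 M23 M24 M33 M34 M44 N1 N3 N4 T11 T12 T13 T14 T23 T24 T33 T34 T44 : R)
 (p11 : 0 <= M11) (p12 : 0 <= M12) (p13 : 0 <= M13) (p14 : 0 <= M14) (p23 : 0 <= M23) (p24 : 0 <= M24) (p33 : 0 <= M33) (p34 : 0 <= M34) (p44 : 0 <= M44)
 (q1 : 0 <= N1) (q3 : 0 <= N3) (q4 : 0 <= N4)
 (t11 : M11 * (- 14200%:R) <= 10000%:R * T11)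
 (t12 : M12 * (- 4200%:R) <= 10000%:R * T12)
 (t13 : M13 * 5800%:R <= 10000%:R * T13)
 (t14 : M14 * 15800%:R <= 10000%:R * T14)
 (t23 : M23 * 8218%:R <= 10000%:R * T23)
 (t24 : M24 * 17480%:R <= 10000%:R * T24)
 (t33 : M33 * 14142%:R <= 10000%:R * T33)
 (t34 : M34 * 21913%:R <= 10000%:R * T34)
 (t44 : M44 * 28284%:R <= 10000%:R * T44)
 (R1 : 2%:R * M11 + M12 + M13 + M14 = N1)
 (R3 : M13 + M23 + 2%:R * M33 + M34 = 3%:R * N3)
 (R4 : M14 + M24 + M34 + 2%:R * M44 = 4%:R * N4)
 (Rrel : N3 + 2%:R * N4 = 4%:R + N1) :
 N4 = 0 -> N3 = 5%:R -> N1 = 1 -> M12 = 1 -> M33 <= 6%:R -> 103072%:R < 10000%:R * (T11 + T12 + T13 + T14 + T23 + T24 + T33 + T34 + T44).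
Proof. move=> *; lra. Qed.


End MP.
Import MP.

Module MI.
Set Implicit Arguments. Unset Strict Implicit. Unset Printing Implicit Defensive.
Local Open Scope ring_scope.

Lemma cast1 (R : rcfType) k a b c d x : (k * a + b + c + d = x)%N ->
  k%:R * a%:R + b%:R + c%:R + d%:R = x%:R :> R.
Proof. by move=> <-; rewrite !natrD natrM. Qed.
Lemma cast3 (R : rcfType) k j a b c d x : (a + b + k * c + d = j * x)%N ->
  a%:R + b%:R + k%:R * c%:R + d%:R = j%:R * x%:R :> R.
Proof. by move=> h; rewrite -[RHS]natrM -h !natrD natrM. Qed.
Lemma cast4 (R : rcfType) k j a b c d x : (a + b + c + k * d = j * x)%N ->
  a%:R + b%:R + c%:R + k%:R * d%:R = j%:R * x%:R :> R.
Proof. by move=> h; rewrite -[RHS]natrM -h !natrD natrM. Qed.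
Lemma castrel (R : rcfType) k j a b x : (a + k * b = j + x)%N ->
  a%:R + k%:R * b%:R = j%:R + x%:R :> R.
Proof. by move=> h; rewrite -natrM -natrD h natrD. Qed.

Section G.
Variable R : rcfType.
Variable n : nat.
Variable e : rel 'I_n.
Local Notation m := (medges e).
Local Notation nv := (nverts_deg e).
Local Notation F := (Fr R).
Local Notation "a // b" := (a%:R / b%:R : R) (at level 40).

Lemma natR (a b : nat) : a = b -> (a%:R : R) = b%:R.
Proof. by move=> ->. Qed.

Lemma Lsc (k : nat) (c x : R) : c <= 10000%:R * x -> k%:R * c <= 10000%:R * (k%:R * x).
Proof. by move=> h; rewrite mulrCA; apply: ler_wpM2l. Qed.

Lemma fin_step (a f12 f22 f23 f33 S : R) : f12 = 1 -> 141421 // 100000 <= f22 ->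
  f23 <= 223607 // 100000 -> f33 <= 282843 // 100000 ->
  103072%:R < 10000%:R * S ->
  a * f22 + ((f12 - f22) + (f23 - f22) + 7%:R * (f33 - f22)) < a * f22 + S.
Proof. move=> *; lra. Qed.

Lemma Ebnds :
  - 14200%:R <= 10000%:R * (F 1 1 - F 2 2) /\
  - 4200%:R <= 10000%:R * (F 1 2 - F 2 2) /\
  5800%:R <= 10000%:R * (F 1 3 - F 2 2) /\
  15800%:R <= 10000%:R * (F 1 4 - F 2 2) /\
  8218%:R <= 10000%:R * (F 2 3 - F 2 2) /\
  17480%:R <= 10000%:R * (F 2 4 - F 2 2) /\
  14142%:R <= 10000%:R * (F 3 3 - F 2 2) /\
  21913%:R <= 10000%:R * (F 3 4 - F 2 2) /\
  28284%:R <= 10000%:R * (F 4 4 - F 2 2).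
Proof.
have [b11 [b12 [b13 [b14 [b22 [b23 [b24 [b33 [b34 b44]]]]]]]]] := bounds R.
move/andP: b22 => [b22l b22u]; move/andP: b23 => [b23l b23u].
move/andP: b24 => [b24l b24u]; move/andP: b33 => [b33l b33u].
move/andP: b34 => [b34l b34u]; move/andP: b44 => [b44l b44u].
rewrite b11 b12 b13 b14.
do ! split; lra.
Qed.

Lemma realcase (m11 m12 m13 m14 m23 m24 m33 m34 m44 n1 n3 n4 : nat)
  (f11 f12 f13 f14 f22 f23 f24 f33 f34 f44 : R) :
  - 14200%:R <= 10000%:R * (f11 - f22) ->
  - 4200%:R <= 10000%:R * (f12 - f22) ->
  5800%:R <= 10000%:R * (f13 - f22) ->
  15800%:R <= 10000%:R * (f14 - f22) ->
  8218%:R <= 10000%:R * (f23 - f22) ->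
  17480%:R <= 10000%:R * (f24 - f22) ->
  14142%:R <= 10000%:R * (f33 - f22) ->
  21913%:R <= 10000%:R * (f34 - f22) ->
  28284%:R <= 10000%:R * (f44 - f22) ->
  (2 * m11 + m12 + m13 + m14 = n1)%N ->
  (m13 + m23 + 2 * m33 + m34 = 3 * n3)%N ->
  (m14 + m24 + m34 + 2 * m44 = 4 * n4)%N ->
  (n3 + 2 * n4 = 4 + n1)%N ->
  [|| (2 <= n4)%N, (n4 == 1%N) && (3 <= n3)%N, (n4 == 0%N) && (6 <= n3)%N,
      [&& n4 == 1%N, n3 == 2%N, m44 == 0%N & (m34 <= 2)%N],
      [&& n4 == 0%N, n3 == 5%N, n1 == 1%N & m13 == 1%N] |
      [&& n4 == 0%N, n3 == 5%N, n1 == 1%N, m12 == 1%N & (m33 <= 6)%N]] ->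
  103072%:R < 10000%:R * (m11%:R * (f11 - f22) + m12%:R * (f12 - f22) +
     m13%:R * (f13 - f22) + m14%:R * (f14 - f22) +
     m23%:R * (f23 - f22) + m24%:R * (f24 - f22) +
     m33%:R * (f33 - f22) + m34%:R * (f34 - f22) +
     m44%:R * (f44 - f22)).
Proof.
move=> c11 c12 c13 c14 c23 c24 c33 c34 c44 H1 H3 H4 hrel hc.
have t11 := Lsc m11 c11; have t12 := Lsc m12 c12; have t13 := Lsc m13 c13.
have t14 := Lsc m14 c14; have t23 := Lsc m23 c23; have t24 := Lsc m24 c24.
have t33 := Lsc m33 c33; have t34 := Lsc m34 c34; have t44 := Lsc m44 c44.
have R1 := cast1 R H1; have R3 := cast3 R H3; have R4 := cast4 R H4; have Rrel := castrel R hrel.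
have p11 := ler0n R m11; have p12 := ler0n R m12; have p13 := ler0n R m13.
have p14 := ler0n R m14; have p23 := ler0n R m23; have p24 := ler0n R m24.
have p33 := ler0n R m33; have p34 := ler0n R m34; have p44 := ler0n R m44.
have q1 := ler0n R n1; have q3 := ler0n R n3; have q4 := ler0n R n4.
case/or4P: hc => [h|/andP[/eqP h1 h]|/andP[/eqP h1 h]|/orP[|/orP[]]].
- have h' : (2%:R : R) <= n4%:R by rewrite ler_nat.
  exact: (@caseA1 R _ _ _ _ _ _ _ _ _ _ _ _ _ _ _ _ _ _ _ _ _ p11 p12 p13 p14 p23 p24 p33 p34 p44 q1 q3 q4 t11 t12 t13 t14 t23 t24 t33 t34 t44 R1 R3 R4 Rrel) h'.
- have h' : (3%:R : R) <= n3%:R by rewrite ler_nat.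
  have h1' : (n4%:R : R) = 1 by rewrite h1.
  exact: (@caseA2 R _ _ _ _ _ _ _ _ _ _ _ _ _ _ _ _ _ _ _ _ _ p11 p12 p13 p14 p23 p24 p33 p34 p44 q1 q3 q4 t11 t12 t13 t14 t23 t24 t33 t34 t44 R1 R3 R4 Rrel) h1' h'.
- have h' : (6%:R : R) <= n3%:R by rewrite ler_nat.
  have h1' : (n4%:R : R) = 0 by rewrite h1.
  exact: (@caseA3 R _ _ _ _ _ _ _ _ _ _ _ _ _ _ _ _ _ _ _ _ _ p11 p12 p13 p14 p23 p24 p33 p34 p44 q1 q3 q4 t11 t12 t13 t14 t23 t24 t33 t34 t44 R1 R3 R4 Rrel) h1' h'.
- case/and4P => /eqP h1 /eqP h2 /eqP h3 h4.
  have h1' : (n4%:R : R) = 1 by rewrite h1.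
  have h2' : (n3%:R : R) = 2%:R by rewrite h2.
  have h3' : (m44%:R : R) = 0 by rewrite h3.
  have h4' : (m34%:R : R) <= 2%:R by rewrite ler_nat.
  exact: (@caseB R _ _ _ _ _ _ _ _ _ _ _ _ _ _ _ _ _ _ _ _ _ p11 p12 p13 p14 p23 p24 p33 p34 p44 q1 q3 q4 t11 t12 t13 t14 t23 t24 t33 t34 t44 R1 R3 R4 Rrel) h1' h2' h3' h4'.
- case/and4P => /eqP h1 /eqP h2 /eqP h3 /eqP h4.
  have h1' : (n4%:R : R) = 0 by rewrite h1.
  have h2' : (n3%:R : R) = 5%:R by rewrite h2.
  have h3' : (n1%:R : R) = 1 by rewrite h3.
  have h4' : (m13%:R : R) = 1 by rewrite h4.
  exact: (@caseD1 R _ _ _ _ _ _ _ _ _ _ _ _ _ _ _ _ _ _ _ _ _ p11 p12 p13 p14 p23 p24 p33 p34 p44 q1 q3 q4 t11 t12 t13 t14 t23 t24 t33 t34 t44 R1 R3 R4 Rrel) h1' h2' h3' h4'.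
- case/and5P => /eqP h1 /eqP h2 /eqP h3 /eqP h4 h5.
  have h1' : (n4%:R : R) = 0 by rewrite h1.
  have h2' : (n3%:R : R) = 5%:R by rewrite h2.
  have h3' : (n1%:R : R) = 1 by rewrite h3.
  have h4' : (m12%:R : R) = 1 by rewrite h4.
  have h5' : (m33%:R : R) <= 6%:R by rewrite ler_nat.
  exact: (@caseD2 R _ _ _ _ _ _ _ _ _ _ _ _ _ _ _ _ _ _ _ _ _ p11 p12 p13 p14 p23 p24 p33 p34 p44 q1 q3 q4 t11 t12 t13 t14 t23 t24 t33 t34 t44 R1 R3 R4 Rrel) h1' h2' h3' h4' h5'.
Qed.

Lemma G_lower : (6 <= n)%N -> CTG e ->
  ~ gamma 0 e -> ~ gamma 1 e -> ~ gamma 2 e -> ~ gamma 3 e ->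
  ~ gamma 4 e -> ~ gamma 5 e -> ~ gamma65 e ->
  (n.+2)%:R * F 2 2 +
    ((F 1 2 - F 2 2) + (F 2 3 - F 2 2) + 7%:R * (F 3 3 - F 2 2)) < SOred R e.
Proof.
move=> hn hG g0 g1 g2 g3 g4 g5 g65.
rewrite SO_X //.
have [b11 [b12 [b13 [b14 [b22 [b23 [b24 [b33 [b34 b44]]]]]]]]] := bounds R.
move/andP: b22 => [b22l b22u]; move/andP: b23 => [b23l b23u].
move/andP: b33 => [b33l b33u].
apply: (fin_step _ b12 b22l b23u b33u).
clear b11 b12 b13 b14 b22l b22u b23l b23u b24 b33l b33u b34 b44.
have [c11 [c12 [c13 [c14 [c23 [c24 [c33 [c34 c44]]]]]]]] := Ebnds.
have [hd [H1 H2 H3 H4 [HE HN _]]] := facts hn hG.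
have hrel : (nv 3 + 2 * nv 4 = 4 + nv 1)%N by clear -H1 H2 H3 H4 HE HN; lia.
apply: (realcase c11 c12 c13 c14 c23 c24 c33 c34 c44 H1 H3 H4 hrel).
clear c11 c12 c13 c14 c23 c24 c33 c34 c44.
have hs : simple_graph e by case: hG.
case: (leqP 2 (nv 4)) => h4a; first done.
have [h4|h4] : nv 4 = 1%N \/ nv 4 = 0%N by lia.
  case: (leqP 3 (nv 3)) => h3; first by rewrite h4.
  have h3' : nv 3 = 2%N by lia.
  have m44 : m 4 4 = 0%N by apply: mii0 => //; rewrite h4.
  have m34 : (m 3 4 <= 2)%N by have := mij_le e (i := 3%N) (j := 4%N) isT; rewrite h3' h4.
  by rewrite h4 h3' m44 m34 /= ?orbT.
case: (leqP 6 (nv 3)) => h3; first by rewrite h4 /= ?orbT.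
have [h3'|h3'] : nv 3 = 4%N \/ nv 3 = 5%N by lia.
  exfalso.
  have e11 : m 1 1 = 0%N by lia.
  have e12 : m 1 2 = 0%N by lia.
  have e13 : m 1 3 = 0%N by lia.
  have e14 : m 1 4 = 0%N by lia.
  have e24 : m 2 4 = 0%N by lia.
  have e34 : m 3 4 = 0%N by lia.
  have e44 : m 4 4 = 0%N by lia.
  case: (m 3 3 =P 6%N) => h33.
    by apply: (no_K4 hn hG h3' e13 _ e34); lia.
  have Hg : gamma (5 - m 3 3) e.
    split => //; split.
      move=> i /andP[hi1 hi4].
      by case: i hi1 hi4 => [|[|[|[|[|i]]]]] //= _ _; lia.
    move=> i j hi hij hj.
    by case: i hi hij => [|[|[|[|[|i]]]]] //= _; case: j hj => [|[|[|[|[|j]]]]] //= _ _; lia.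
  have : (5 - m 3 3 <= 5)%N by lia.
  by move: Hg; case: (5 - m 3 3)%N => [|[|[|[|[|[|k]]]]]].
have e11 : m 1 1 = 0%N by lia.
have e14 : m 1 4 = 0%N by lia.
have e24 : m 2 4 = 0%N by lia.
have e34 : m 3 4 = 0%N by lia.
have e44 : m 4 4 = 0%N by lia.
have hn1 : nv 1 = 1%N by lia.
case: (m 1 3 =P 1%N) => h13.
  by rewrite h4 h3' hn1 /= ?orbT.
have h12 : m 1 2 = 1%N by lia.
case: (m 3 3 =P 7%N) => h33.
  exfalso; apply: g65.
  split => //; split.
    move=> i /andP[hi1 hi4].
    by case: i hi1 hi4 => [|[|[|[|[|i]]]]] //= _ _; lia.
  move=> i j hi hij hj.
  by case: i hi hij => [|[|[|[|[|i]]]]] //= _; case: j hj => [|[|[|[|[|j]]]]] //= _ _; lia.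
have h33' : (m 3 3 <= 6)%N by lia.
by rewrite h4 h3' hn1 h12 h33' /= ?orbT.
Qed.
End G.

End MI.
Import MI.

Local Open Scope ring_scope.

Lemma cmp_step (R : rcfType) (A f12 f22 f23 f33 : R) : f12 = 1 ->
  141421%:R / 100000%:R <= f22 <= 141422%:R / 100000%:R ->
  223606%:R / 100000%:R <= f23 <= 223607%:R / 100000%:R ->
  282842%:R / 100000%:R <= f33 <= 282843%:R / 100000%:R ->
  [/\ A + (2%:R * (f23 - f22) + 5%:R * (f33 - f22)) < A + (4%:R * (f23 - f22) + 4%:R * (f33 - f22)),
      A + (4%:R * (f23 - f22) + 4%:R * (f33 - f22)) < A + (6%:R * (f23 - f22) + 3%:R * (f33 - f22)),
      A + (6%:R * (f23 - f22) + 3%:R * (f33 - f22)) < A + (8%:R * (f23 - f22) + 2%:R * (f33 - f22)),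
      A + (8%:R * (f23 - f22) + 2%:R * (f33 - f22)) < A + (10%:R * (f23 - f22) + 1%:R * (f33 - f22)) &
    [/\ A + (10%:R * (f23 - f22) + 1%:R * (f33 - f22)) < A + (12%:R * (f23 - f22) + 0%:R * (f33 - f22)) &
      A + (12%:R * (f23 - f22) + 0%:R * (f33 - f22)) <
        A + ((f12 - f22) + (f23 - f22) + 7%:R * (f33 - f22))]].
Proof.
move=> h12 /andP[b22l b22u] /andP[b23l b23u] /andP[b33l b33u].
split; try split; lra.
Qed.

Theorem theorem3p13 (R : rcfType) (n : nat) (hn : (6 <= n)%N)
  (G1 G2 G3 G4 G5 G6 G7 G : rel 'I_n) :
  gamma 0 G1 -> gamma 1 G2 -> gamma 2 G3 -> gamma 3 G4 ->
  gamma 4 G5 -> gamma 5 G6 -> gamma65 G7 ->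
  CTG G ->
  ~ gamma 0 G -> ~ gamma 1 G -> ~ gamma 2 G -> ~ gamma 3 G ->
  ~ gamma 4 G -> ~ gamma 5 G -> ~ gamma65 G ->
  SOred R G1 < SOred R G2 /\ SOred R G2 < SOred R G3 /\
  SOred R G3 < SOred R G4 /\ SOred R G4 < SOred R G5 /\
  SOred R G5 < SOred R G6 /\ SOred R G6 < SOred R G7 /\
  SOred R G7 < SOred R G.
Proof.
move=> h1 h2 h3 h4 h5 h6 h7 hG n0 n1 n2 n3 n4 n5 n65.
have L := @G_lower R n G hn hG n0 n1 n2 n3 n4 n5 n65.
rewrite (@gamma_SO R n G1 0 isT hn h1) (@gamma_SO R n G2 1 isT hn h2)
  (@gamma_SO R n G3 2 isT hn h3) (@gamma_SO R n G4 3 isT hn h4)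
  (@gamma_SO R n G5 4 isT hn h5) (@gamma_SO R n G6 5 isT hn h6)
  (@gamma65_SO R n G7 hn h7).
have [_ [b12 [_ [_ [b22 [b23 [_ [b33 _]]]]]]]] := bounds R.
have [c1 c2 c3 c4 [c5 c6]] := @cmp_step R (n.+2%:R * Fr R 2 2) _ _ _ _ b12 b22 b23 b33.
by do !split.
Qed.
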